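(* Let $v\in\Sigma^*$, let $u$ be a $v$-minimal word, $i\in\mathrm{supp}(u)$, and $r_i=\mathrm{Rnk}(\mathcal{I}_i)$. Then $|\mathcal{I}_i/\!\sim_i|\le D(2,r_i,n)+1$. In particular, for any $g\in\mathcal{I}_i$ there is a word $z$ with $|z|\le D(2,r_i,n)$ such that $g\theta_i(z)\sim_i 0_i$.
   Context: Let $\mathcal{A}=\langle Q,\Sigma,\delta\rangle$ be a synchronizing automaton with $n=|Q|$ states $q_1,\dots,q_n$; write $q\cdot u$ for the action of $u\in\Sigma^*$ (extended to subsets) and $\mathrm{rk}(u)=|Q\cdot u|$. Each word acts linearly on $\mathbb{C}Q$ by $q\mapsto q\cdot u$, preserving $w^\perp=\{x:\langle x,q_1+\dots+q_n\rangle=0\}$; let $\rho:\Sigma^*\to\mathbb{M}_{n-1}(\mathbb{C})$ be the induced representation and $\mathcal{R}$ the $\mathbb{C}$-algebra generated by $\rho(\Sigma^* )$. Write $\mathcal{R}/\mathrm{Rad}(\mathcal{R})\cong\prod_{i=1}^k\mathbb{M}_{n_i}(\mathbb{C})$ (Jacobson radical, Wedderburn–Artin) and let $\theta_i:\Sigma^*\to\mathbb{M}_{n_i}(\mathbb{C})$ be $\rho$ followed by the quotient map and the $i$-th projection; $0_i$ is the zero matrix. The monoid $\theta_i(\Sigma^* )$ has a unique $0$-minimal ideal $\mathcal{I}_i$; $\mathrm{Rnk}(\mathcal{I}_i)=\min\{\mathrm{rk}(x): x\in\Sigma^*,\ \theta_i(x)\in\mathcal{I}_i\setminus\{0_i\}\}$.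 The support of a word $z$ is $\mathrm{supp}(z)=\{i:\theta_i(z)\neq0_i\}$. For $v\in\Sigma^*$, a word $u\in\Sigma^*v\Sigma^*$ is $v$-minimal if $\mathrm{supp}(u)\neq\emptyset$ and there is no $z\in\Sigma^*v\Sigma^*$ with $\emptyset\neq\mathrm{supp}(z)\subsetneq\mathrm{supp}(u)$. For such $u$, $i\in\mathrm{supp}(u)$ and $g\in\mathcal{I}_i$, a word $w$ $u$-represents $g$ if $w\in\Sigma^*u\Sigma^*$, $\theta_i(w)=g$, and either $g=0_i$ or $\mathrm{rk}(w)$ is minimum among all words $w'\in\Sigma^*u\Sigma^*$ with $\theta_i(w')=g$. Define $\sigma_i$ on $\mathcal{I}_i$ by $g\,\sigma_i\,f$ iff $g=f$ or there exist words $w_1,w_2$ that $u$-represent $g$ and $f$ respectively with $|Q\cdot w_1\cap Q\cdot w_2|>1$; let $\sim_i$ be the transitive closure of $\sigma_i$ (an equivalence relation on $\mathcal{I}_i$). $D(2,r,n)$ denotes the maximum size of a family of $r$-element subsets of $[1,n]$ in which every $2$-element subset is contained in at most one member. *)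

(* Defs.v *)
From Stdlib Require Import Relations.
From mathcomp Require Import all_boot all_algebra.
From mathcomp Require Import reals complex.

Set Implicit Arguments.
Unset Strict Implicit.
Unset Printing Implicit Defensive.
Import GRing.Theory.
Local Open Scope ring_scope.

(* ---------- Automata ----------
   The automaton has n = m.+1 states q_1..q_n, encoded as 'I_m.+1 (q_n is ord_max);
   the alphabet is a finite type S; words are seq S.                             *)
Section Automaton.
Variables (S : finType) (m : nat) (delta : 'I_m.+1 -> S -> 'I_m.+1).

Definition act (q : 'I_m.+1) (w : seq S) : 'I_m.+1 := foldl delta q w.
Definition img (w : seq S) : {set 'I_m.+1} := [set act q w | q : 'I_m.+1].
Definition rk (w : seq S) : nat := #|img w|.
Definition synchronizing : Prop := exists w : seq S, rk w = 1%N.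

(* The representation rho on w^perp = {x | <x, q_1+...+q_n> = 0}, written in the
   basis b_j = q_j - q_n (j < m = n-1), with row vectors (x |-> x . w is
   x |-> x *m rho w, so rho (w1 ++ w2) = rho w1 *m rho w2).                      *)
Definition rho (F : fieldType) (w : seq S) : 'M[F]_m :=
  \matrix_(j < m, l < m)
    ((act (widen_ord (leqnSn m) j) w == widen_ord (leqnSn m) l)%:R
     - (act ord_max w == widen_ord (leqnSn m) l)%:R).
End Automaton.

Section Algebra.
Variables (F : fieldType) (m : nat).

Definition gen_alg (X : 'M[F]_m -> Prop) : 'M[F]_m -> Prop :=
  fun A => forall Y : 'M[F]_m -> Prop,
    (forall B, X B -> Y B) -> Y 1%:M ->
    (forall B C, Y B -> Y C -> Y (B + C)) ->
    (forall (c : F) B, Y B -> Y (c *: B)) ->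
    (forall B C, Y B -> Y C -> Y (B *m C)) -> Y A.

Definition left_ideal (Ralg L : 'M[F]_m -> Prop) : Prop :=
  [/\ forall x, L x -> Ralg x, L 0,
      forall x y, L x -> L y -> L (x + y) &
      forall a x, Ralg a -> L x -> L (a *m x)].

Definition maximal_left_ideal (Ralg L : 'M[F]_m -> Prop) : Prop :=
  [/\ left_ideal Ralg L, exists x, Ralg x /\ ~ L x &
      forall L', left_ideal Ralg L' -> (forall x, L x -> L' x) ->
        (forall x, L' x -> L x) \/ (forall x, Ralg x -> L' x)].

Definition jacobson_rad (Ralg : 'M[F]_m -> Prop) : 'M[F]_m -> Prop :=
  fun x => Ralg x /\ forall L, maximal_left_ideal Ralg L -> L x.

(* phi = (phi_i)_{i<k} induces an isomorphism of algebras
   Ralg / Rad(Ralg) ~= prod_{i<k} M_{d i}(F)  (Wedderburn-Artin decomposition) *)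
Definition WA_decomp (Ralg : 'M[F]_m -> Prop) (k : nat) (d : 'I_k -> nat)
  (phi : forall i : 'I_k, 'M[F]_m -> 'M[F]_(d i)) : Prop :=
  (forall i, (0 < d i)%N) /\
  (forall i x y, Ralg x -> Ralg y -> phi i (x + y) = phi i x + phi i y) /\
  (forall i (c : F) x, Ralg x -> phi i (c *: x) = c *: phi i x) /\
  (forall i x y, Ralg x -> Ralg y -> phi i (x *m y) = phi i x *m phi i y) /\
  (forall i, phi i 1%:M = 1%:M) /\
  (forall g : forall i : 'I_k, 'M[F]_(d i),
        exists x, Ralg x /\ forall i, phi i x = g i) /\
  (forall x, Ralg x -> ((forall i, phi i x = 0) <-> jacobson_rad Ralg x)).
End Algebra.

Section MonoidIdeal.
Variables (F : fieldType) (d : nat).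

Definition mon_ideal (M J : 'M[F]_d -> Prop) : Prop :=
  [/\ forall x, J x -> M x, exists x, J x &
      forall a b x, M a -> M b -> J x -> J (a *m x *m b)].

Definition zero_minimal_ideal (M J : 'M[F]_d -> Prop) : Prop :=
  [/\ mon_ideal M J, exists x, J x /\ x != 0 &
      forall K, mon_ideal M K -> (forall x, K x -> J x) ->
        (forall x, K x -> x = 0) \/ (forall x, J x -> K x)].

Definition unique_zero_minimal_ideal (M J : 'M[F]_d -> Prop) : Prop :=
  zero_minimal_ideal M J /\
  forall J', zero_minimal_ideal M J' -> forall x, J' x <-> J x.
End MonoidIdeal.

Section Component.
Variables (S : finType) (m : nat) (delta : 'I_m.+1 -> S -> 'I_m.+1).
Variables (F : fieldType) (k : nat) (d : 'I_k -> nat)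
  (phi : forall i : 'I_k, 'M[F]_m -> 'M[F]_(d i)).

Definition theta (i : 'I_k) (w : seq S) : 'M[F]_(d i) := phi i (rho delta F w).

Definition theta_monoid (i : 'I_k) : 'M[F]_(d i) -> Prop :=
  fun g => exists w, theta i w = g.

Definition supp (w : seq S) : {set 'I_k} := [set i | theta i w != 0].

Definition is_Rnk (i : 'I_k) (I : 'M[F]_(d i) -> Prop) (r : nat) : Prop :=
  (exists x, [/\ I (theta i x), theta i x != 0 & rk delta x = r]) /\
  (forall x, I (theta i x) -> theta i x != 0 -> (r <= rk delta x)%N).

Definition v_minimal (v u : seq S) : Prop :=
  [/\ infix v u, supp u != set0 &
      ~ exists z, [/\ infix v z, supp z != set0 & supp z \proper supp u]].

Definition u_represents (u : seq S) (i : 'I_k) (g : 'M[F]_(d i)) (w : seq S) : Prop :=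
  [/\ infix u w, theta i w = g &
      g = 0 \/ forall w', infix u w' -> theta i w' = g -> (rk delta w <= rk delta w')%N].

Definition sigma_rel (u : seq S) (i : 'I_k) (I : 'M[F]_(d i) -> Prop)
  (g f : 'M[F]_(d i)) : Prop :=
  [/\ I g, I f &
      g = f \/ exists w1 w2, [/\ u_represents u g w1, u_represents u f w2 &
                               (1 < #|img delta w1 :&: img delta w2|)%N]].

Definition sim_rel (u : seq S) (i : 'I_k) (I : 'M[F]_(d i) -> Prop) :
  relation 'M[F]_(d i) := clos_trans _ (sigma_rel u I).
End Component.

Arguments theta_monoid [S m] delta [F k d] phi i _.
Arguments is_Rnk [S m] delta [F k d] phi i I r.
Arguments u_represents [S m] delta [F k d] phi u i g w.
Arguments sigma_rel [S m] delta [F k d] phi u i I g f.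
Arguments sim_rel [S m] delta [F k d] phi u i I _ _.

Definition D2 (r n : nat) : nat :=
  \max_(Fam : {set {set 'I_n}} |
          [forall A in Fam, #|A| == r] &&
          [forall x : 'I_n, forall y : 'I_n,
             (x != y) ==> (#|[set A in Fam | (x \in A) && (y \in A)]| <= 1)%N])
    #|Fam|.

(* Main.v *)
Require Import Defs.
From Stdlib Require Import Relations.
From mathcomp Require Import all_boot all_algebra.
From mathcomp Require Import reals complex.
Set Implicit Arguments.
Unset Strict Implicit.
Unset Printing Implicit Defensive.
Import GRing.Theory.
Local Open Scope ring_scope.

Section Gen.
Variables (S : finType) (m : nat) (delta : 'I_m.+1 -> S -> 'I_m.+1) (F : fieldType).

Lemma act_cat q w1 w2 : act delta q (w1 ++ w2) = act delta (act delta q w1) w2.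
Proof. by rewrite /act foldl_cat. Qed.

Lemma img_cat w1 w2 : img delta (w1 ++ w2) = (fun q => act delta q w2) @: img delta w1.
Proof. rewrite /img -imset_comp; apply: eq_imset => q /=; by rewrite act_cat. Qed.

Lemma rk_catl w1 w2 : (rk delta (w1 ++ w2) <= rk delta w1)%N.
Proof. by rewrite /rk img_cat leq_imset_card. Qed.

Lemma rk_catr w1 w2 : (rk delta (w1 ++ w2) <= rk delta w2)%N.
Proof.
rewrite /rk; apply: subset_leq_card; apply/subsetP => x /imsetP[q _ ->].
by rewrite act_cat; apply: imset_f.
Qed.

Lemma rk_gt0 w : (0 < rk delta w)%N.
Proof. rewrite /rk card_gt0; apply/set0Pn; exists (act delta ord0 w); exact: imset_f. Qed.

Lemma rho_nil : rho delta F [::] = 1%:M.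
Proof.
apply/matrixP => a b; rewrite !mxE /act /=.
have -> : (ord_max == widen_ord (leqnSn m) b) = false.
  by apply/negbTE; rewrite -val_eqE /= neq_ltn ltn_ord orbT.
by rewrite subr0 -val_eqE /=.
Qed.

Lemma rho_rk1 w : rk delta w = 1%N -> rho delta F w = 0.
Proof.
move=> /eqP /cards1P [c hc].
have hq : forall q, act delta q w = c.
  by move=> q; apply/set1P; rewrite -hc; apply: imset_f.
by apply/matrixP => a b; rewrite !mxE !hq subrr.
Qed.

Lemma sum_delta (f : 'I_m.+1 -> F) q : f ord_max = 0 ->
  \sum_(l < m) (q == widen_ord (leqnSn m) l)%:R * f (widen_ord (leqnSn m) l) = f q.
Proof.
move=> f0.
have h := @big_ord_recr F 0 +%R m (fun l : 'I_m.+1 => (q == l)%:R * f l).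
rewrite /= f0 mulr0 addr0 in h; rewrite -h.
rewrite (bigD1 q) //= eqxx mul1r big1 ?addr0 // => l /negbTE.
by rewrite eq_sym => ->; rewrite mul0r.
Qed.

Lemma rho_cat w1 w2 : rho delta F (w1 ++ w2) = rho delta F w1 *m rho delta F w2.
Proof.
apply/matrixP => a b; rewrite !mxE.
set f := fun q : 'I_m.+1 => ((act delta q w2 == widen_ord (leqnSn m) b)%:R
   - (act delta ord_max w2 == widen_ord (leqnSn m) b)%:R) : F.
have f0 : f ord_max = 0 by rewrite /f subrr.
under eq_bigr => l _ do rewrite !mxE mulrBl.
rewrite sumrB (sum_delta _ f0) (sum_delta _ f0) /f !act_cat.
by rewrite opprB addrA subrK.
Qed.

End Gen.
From Stdlib Require Import Classical ClassicalEpsilon.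


Lemma reduce (T : eqType) (R : T -> T -> Prop) :
  (forall x y, R x y -> R y x) -> (forall x y z, R x y -> R y z -> R x z) ->
  forall L : seq T, (forall x, x \in L -> R x x) ->
  exists L', [/\ uniq L', {subset L' <= L},
    (forall x y, x \in L' -> y \in L' -> R x y -> x = y) &
    forall x, x \in L -> exists2 y, y \in L' & R x y].
Proof.
move=> Rs Rt; elim=> [|x L IH] hrefl.
  by exists [::]; split => // x; rewrite in_nil.
have [L' [hu hsub hpw hcov]] : exists L', [/\ uniq L', {subset L' <= L},
    (forall x y, x \in L' -> y \in L' -> R x y -> x = y) &
    forall x, x \in L -> exists2 y, y \in L' & R x y].
  by apply: IH => y hy; apply: hrefl; rewrite inE hy orbT.
have hxx : R x x by apply: hrefl; rewrite inE eqxx.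
case: (classic (exists2 y, y \in L' & R x y)) => [[y hy hxy]|hn].
  exists L'; split => //.
  - by move=> z hz; rewrite inE (hsub _ hz) orbT.
  - move=> z; rewrite inE => /orP[/eqP ->|hz]; first by exists y.
    exact: hcov.
have hxL : x \notin L' by apply/negP => hx; apply: hn; exists x.
exists (x :: L'); split.
- by rewrite /= hxL hu.
- move=> z; rewrite !inE => /orP[->//|hz]; by rewrite (hsub _ hz) orbT.
- move=> a b; rewrite !inE => /orP[/eqP->|ha] /orP[/eqP->|hb] hab //.
  + by exfalso; apply: hn; exists b.
  + by exfalso; apply: hn; exists a => //; apply: Rs.
  + exact: hpw.
- move=> z; rewrite inE => /orP[/eqP ->|hz]; first by exists x; rewrite ?inE ?eqxx.
  by have [y hy hzy] := hcov z hz; exists y; rewrite // inE hy orbT.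
Qed.

Section Main.
Variables (S : finType) (m : nat) (delta : 'I_m.+1 -> S -> 'I_m.+1) (F : fieldType)
  (k : nat) (d : 'I_k -> nat) (phi : forall j : 'I_k, 'M[F]_m -> 'M[F]_(d j))
  (u : seq S) (j : 'I_k) (I : 'M[F]_(d j) -> Prop) (r : nat).
Local Notation Ralg := (gen_alg (fun A => exists w, A = rho delta F w)).
Hypothesis HWA : WA_decomp Ralg phi.
Hypothesis Hsync : synchronizing delta.
Hypothesis HI : unique_zero_minimal_ideal (theta_monoid delta phi j) I.
Hypothesis Hu : j \in supp delta phi u.
Hypothesis HR : is_Rnk delta phi j I r.
Local Notation th := (theta delta phi j).
Local Notation rk := (rk delta).
Local Notation img := (img delta).

Lemma Ralg_rho w : Ralg (rho delta F w).
Proof. by move=> Y HX *; apply: HX; exists w. Qed.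
Lemma Ralg_mul B C : Ralg B -> Ralg C -> Ralg (B *m C).
Proof. by move=> hB hC Y h1 h2 h3 h4 h5; apply h5; [exact: (hB Y h1 h2 h3 h4 h5) | exact: (hC Y h1 h2 h3 h4 h5)]. Qed.
Lemma Ralg_add B C : Ralg B -> Ralg C -> Ralg (B + C).
Proof. by move=> hB hC Y h1 h2 h3 h4 h5; apply h3; [exact: (hB Y h1 h2 h3 h4 h5) | exact: (hC Y h1 h2 h3 h4 h5)]. Qed.
Lemma Ralg_scale c B : Ralg B -> Ralg (c *: B).
Proof. by move=> hB Y h1 h2 h3 h4 h5; apply h4; exact: (hB Y h1 h2 h3 h4 h5). Qed.
Lemma Ralg_1 : Ralg 1%:M.
Proof. by move=> Y h1 h2 *. Qed.
Lemma Ralg_0 : Ralg 0.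
Proof. by have := Ralg_scale 0 Ralg_1; rewrite scale0r. Qed.

Lemma phi0 i : phi i 0 = 0.
Proof.
case: HWA => _ [hadd _]; have := hadd i 0 0 Ralg_0 Ralg_0; rewrite addr0 => h.
by apply: (addrI (phi i 0)); rewrite addr0 -h.
Qed.

Lemma th_cat w1 w2 : th (w1 ++ w2) = th w1 *m th w2.
Proof.
rewrite /theta rho_cat; case: HWA => _ [_ [_ [hmul _]]].
exact: hmul (Ralg_rho _) (Ralg_rho _).
Qed.

Lemma th_nil : th [::] = 1%:M.
Proof. by rewrite /theta rho_nil; case: HWA => _ [_ [_ [_ [h1 _]]]]; apply: h1. Qed.

Lemma th_rk1 w : rk w = 1%N -> th w = 0.
Proof. by move=> h; rewrite /theta rho_rk1 // phi0. Qed.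

Lemma sync_word : exists w0, th w0 = 0.
Proof. by case: Hsync => w0 h; exists w0; apply: th_rk1. Qed.

Lemma I_ideal g a b : I g -> I (th a *m g *m th b).
Proof.
case: HI => [[[_ _ hid] _ _] _] hg.
by apply: hid => //; [exists a | exists b].
Qed.

Lemma I_right g b : I g -> I (g *m th b).
Proof. by move=> hg; have := I_ideal [::] b hg; rewrite th_nil mul1mx. Qed.

Lemma I_word g : I g -> exists w, th w = g.
Proof. by case: HI => [[[hM _ _] _ _] _]; apply: hM. Qed.

Lemma I0 : I 0.
Proof.
case: HI => [[[_ [x0 hx0] _] _ _] _]; have [w0 h0] := sync_word.
by have := I_ideal w0 w0 hx0; rewrite h0 !mul0mx.
Qed.

Lemma span_zero (A C : 'M[F]_(d j)) :
  (forall w, A *m th w *m C = 0) -> forall B, Ralg B -> A *m phi j B *m C = 0.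
Proof.
move=> H B hB.
case: HWA => _ [hadd [hsc [hmul [h1 _]]]].
suff: Ralg B /\ forall A' C' : 'M[F]_(d j), (forall w, A' *m th w *m C' = 0) -> A' *m phi j B *m C' = 0.
  by case=> _ h; exact: (h A C H).
refine (hB (fun B0 => Ralg B0 /\ forall A' C' : 'M[F]_(d j), (forall w, A' *m th w *m C' = 0) -> A' *m phi j B0 *m C' = 0) _ _ _ _ _).
- move=> X [w ->]; split; [exact: Ralg_rho | by move=> A' C' h; apply: h].
- split; [exact: Ralg_1|]; move=> A' C' h; have := h [::]; by rewrite th_nil h1.
- move=> X Y [hX fX] [hY fY]; split; first exact: Ralg_add.
  by move=> A' C' h; rewrite hadd // mulmxDr mulmxDl fX // fY // addr0.
- move=> c X [hX fX]; split; first exact: Ralg_scale.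
  by move=> A' C' h; rewrite hsc // -scalemxAr -scalemxAl fX // scaler0.
- move=> X Y [hX fX] [hY fY]; split; first exact: Ralg_mul.
  move=> A' C' h; rewrite hmul // mulmxA -(mulmxA (A' *m phi j X)).
  apply: fX => w; rewrite mulmxA; apply: fY => w'.
  by rewrite -(mulmxA A') -th_cat; apply: h.
Qed.

Lemma entry_delta n (A C : 'M[F]_n) a b s t :
  (A *m delta_mx a b *m C) s t = A s a * C b t.
Proof.
rewrite mxE (bigD1 b) //= big1 ?addr0 => [|y yb].
  rewrite mxE (bigD1 a) //= big1 ?addr0 => [|x xa]; first by rewrite !mxE !eqxx mulr1.
  by rewrite mxE (negbTE xa) mulr0.
rewrite mxE big1 ?mul0r // => x _; by rewrite mxE (negbTE yb) andbF mulr0.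
Qed.

Lemma mx_nz n (A : 'M[F]_n) : A != 0 -> exists s t, A s t != 0.
Proof.
move=> hA; apply: NNPP => hn; move/eqP: hA; apply; apply/matrixP => s t; rewrite mxE.
by case: (eqVneq (A s t) 0) => // h; exfalso; apply: hn; exists s, t.
Qed.

Lemma exists_nz (A C : 'M[F]_(d j)) : A != 0 -> C != 0 -> exists w, A *m th w *m C != 0.
Proof.
move=> hA hC; apply: NNPP => hn.
have H : forall w, A *m th w *m C = 0.
  by move=> w; case: (eqVneq (A *m th w *m C) 0) => // hne; exfalso; apply: hn; exists w.
have [s [a hsa]] := mx_nz hA; have [b [t hbt]] := mx_nz hC.
case: HWA => _ [_ [_ [_ [_ [surj _]]]]].
have [X [hX hXi]] := surj (fun i => \matrix_(x, y) ((x == a :> nat) && (y == b :> nat))%:R).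
have := span_zero H hX; rewrite hXi.
have -> : (\matrix_(x, y) ((x == a :> nat) && (y == b :> nat))%:R : 'M[F]_(d j)) = delta_mx a b.
  by apply/matrixP => x y; rewrite !mxE.
move/matrixP => /(_ s t); rewrite entry_delta mxE => /eqP.
by rewrite mulf_eq0 (negbTE hsa) (negbTE hbt).
Qed.

Lemma rk_lower w : I (th w) -> th w != 0 -> (r <= rk w)%N.
Proof. by case: HR => _ h; apply: h. Qed.

Lemma key_aux Y : th Y != 0 -> I (th Y) -> (rk Y <= r)%N -> infix u Y ->
  forall g, I g -> g != 0 -> exists w, [/\ infix u w, th w = g & (rk w <= r)%N].
Proof.
move=> hY0 hYI hYr hYu g hg hg0.
case: HI => [[_ _ hmin] _].
pose K := fun x => exists a b, x = th a *m th Y *m th b.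
have hK : mon_ideal (theta_monoid delta phi j) K.
  split.
  - move=> x [a [b ->]]; exists (a ++ Y ++ b); by rewrite th_cat th_cat mulmxA.
  - by exists (th Y), [::], [::]; rewrite th_nil mul1mx mulmx1.
  - move=> a' b' x [wa <-] [wb <-] [a [b ->]]; exists (wa ++ a), (b ++ wb).
    by rewrite !th_cat !mulmxA.
have hKI : forall x, K x -> I x by move=> x [a [b ->]]; apply: I_ideal.
case: (hmin K hK hKI) => [h0 | hall].
  exfalso; move/eqP: hY0; apply; apply: h0; exists [::], [::].
  by rewrite th_nil mul1mx mulmx1.
have [a [b hgab]] := hall g hg.
exists (a ++ Y ++ b); split.
- by apply: infix_catl; apply: infix_catr.
- by rewrite th_cat th_cat mulmxA hgab.
- exact: leq_trans (rk_catr delta a (Y ++ b)) (leq_trans (rk_catl delta Y b) hYr).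
Qed.

Lemma key g : I g -> g != 0 -> exists w, [/\ infix u w, th w = g & (rk w <= r)%N].
Proof.
case: HR => [[x0 [hx0 hx0nz hrk]] _].
have hu : th u != 0 by move: Hu; rewrite inE.
have [p hp] := exists_nz hx0nz hu.
apply: (key_aux (Y := x0 ++ p ++ u)).
- by rewrite th_cat th_cat mulmxA.
- by have := I_ideal [::] (p ++ u) hx0; rewrite th_nil mul1mx -th_cat.
- by rewrite -hrk; apply: rk_catl.
- by rewrite catA; apply: suffix_infix.
Qed.

Lemma r_ge2 : (1 < r)%N.
Proof.
case: HR => [[x0 [hx0 hx0nz hrk]] _]; rewrite -hrk.
have := rk_gt0 delta x0; rewrite leq_eqVlt => /orP[/eqP h|//].
by move: hx0nz; rewrite th_rk1 ?eqxx.
Qed.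


Local Notation sigma := (sigma_rel delta phi u j I).
Local Notation sim := (sim_rel delta phi u j I).
Local Notation urep := (u_represents delta phi u j).

Lemma rep_rank g w : I g -> g != 0 -> urep g w -> rk w = r.
Proof.
move=> hg hg0 [hinf hth [e|hmin]]; first by rewrite e eqxx in hg0.
have [w' [h1 h2 h3]] := key hg hg0.
apply/eqP; rewrite eqn_leq (leq_trans (hmin w' h1 h2) h3) /=.
by apply: rk_lower; rewrite hth.
Qed.

Lemma rep_spec g : I g -> g != 0 -> exists w, urep g w /\ rk w = r.
Proof.
move=> hg hg0; have [w [h1 h2 h3]] := key hg hg0.
exists w; split.
  split => //; right => w' hw' hth'; apply: leq_trans h3 _.
  by apply: rk_lower; rewrite hth' // h2.
by apply/eqP; rewrite eqn_leq h3 rk_lower // h2.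
Qed.

Lemma rep_ext g w y : I g -> urep g w -> urep (g *m th y) (w ++ y).
Proof.
move=> hg hw; case: (hw) => hinf hth _; split; first exact: infix_catr.
  by rewrite th_cat hth.
case: (eqVneq (g *m th y) 0) => [->|nz]; [by left| right].
have hg0 : g != 0 by apply: contraNneq nz => ->; rewrite mul0mx.
move=> w' hw' hth'; apply: leq_trans (rk_catl delta w y) _.
rewrite (rep_rank hg hg0 hw); apply: rk_lower; rewrite hth' //; exact: I_right.
Qed.

Lemma inj_img g w y : I g -> urep g w -> g *m th y != 0 ->
  {in img w &, injective (fun q => act delta q y)}.
Proof.
move=> hg hw nz.
have hg0 : g != 0 by apply: contraNneq nz => ->; rewrite mul0mx.
apply/imset_injP; rewrite -img_cat.
change (rk (w ++ y) == rk w); rewrite eqn_leq rk_catl (rep_rank hg hg0 hw) /=.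
case: hw => _ hth _; apply: rk_lower; rewrite th_cat hth //; exact: I_right.
Qed.

Lemma card_inter (f : 'I_m.+1 -> 'I_m.+1) (A B : {set 'I_m.+1}) :
  {in A &, injective f} -> (#|A :&: B| <= #|f @: A :&: f @: B|)%N.
Proof.
move=> hinj; rewrite -(@card_in_imset _ _ f (A :&: B)).
  apply: subset_leq_card; apply/subsetP => x /imsetP[q /setIP[qa qb] ->].
  by rewrite inE !imset_f.
by move=> x y /setIP[hx _] /setIP[hy _]; apply: hinj.
Qed.

Lemma sigma_compat g f y : sigma g f -> sigma (g *m th y) (f *m th y).
Proof.
case=> hg hf H; split; try exact: I_right.
case: H => [->|[w1 [w2 [h1 h2 hc]]]]; first by left.
case: (eqVneq (g *m th y) (f *m th y)) => [e|ne]; first by left.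
right; exists (w1 ++ y), (w2 ++ y); split; try exact: rep_ext.
rewrite !img_cat; case: (eqVneq (g *m th y) 0) => [gz|gnz].
  have fnz : f *m th y != 0 by move: ne; rewrite gz eq_sym.
  apply: leq_trans hc _; rewrite [img w1 :&: _]setIC [_ @: img w1 :&: _]setIC.
  by apply: card_inter; apply: inj_img hf h2 fnz.
by apply: leq_trans hc _; apply: card_inter; apply: inj_img hg h1 gnz.
Qed.

Lemma sigma_sym g f : sigma g f -> sigma f g.
Proof.
case=> hg hf [e|[w1 [w2 [h1 h2 hc]]]]; split => //; first by left.
by right; exists w2, w1; rewrite setIC.
Qed.

Lemma sim_sym g f : sim g f -> sim f g.
Proof.
elim=> [x y h|x y z _ h1 _ h2]; first by apply: t_step; apply: sigma_sym.
exact: t_trans h2 h1.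
Qed.

Lemma sim_refl g : I g -> sim g g.
Proof. by move=> hg; apply: t_step; split => //; left. Qed.

Lemma sim_compat g f y : sim g f -> sim (g *m th y) (f *m th y).
Proof.
elim=> [x z h|x y' z _ h1 _ h2]; first by apply: t_step; apply: sigma_compat.
exact: t_trans h1 h2.
Qed.

Definition imgOf g : {set 'I_m.+1} := epsilon (inhabits set0)
  (fun A => exists w, [/\ urep g w, rk w = r & img w = A]).

Lemma imgOf_spec g : I g -> g != 0 -> exists w, [/\ urep g w, rk w = r & img w = imgOf g].
Proof.
move=> hg hg0; rewrite /imgOf.
apply: (@epsilon_spec _ (inhabits set0) (fun A => exists w, [/\ urep g w, rk w = r & img w = A])).
by have [w [h1 h2]] := rep_spec hg hg0; exists (img w), w.
Qed.

Lemma card_imgOf g : I g -> g != 0 -> #|imgOf g| = r.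
Proof. by move=> hg hg0; have [w [_ <- <-]] := imgOf_spec hg hg0. Qed.

Lemma sigma_of_img g h : I g -> I h -> g != 0 -> h != 0 ->
  (1 < #|imgOf g :&: imgOf h|)%N -> sigma g h.
Proof.
move=> hg hh hg0 hh0 hc.
have [wg [h1 _ e1]] := imgOf_spec hg hg0; have [wh [h2 _ e2]] := imgOf_spec hh hh0.
by split => //; right; exists wg, wh; rewrite e1 e2.
Qed.

Lemma sigma_same g h : I g -> I h -> g != 0 -> h != 0 -> imgOf g = imgOf h -> sigma g h.
Proof.
move=> hg hh hg0 hh0 e; apply: sigma_of_img => //.
by rewrite e setIid (card_imgOf hh hh0) r_ge2.
Qed.

Definition gOf (A : {set 'I_m.+1}) : 'M[F]_(d j) := epsilon (inhabits 0)
  (fun g => I g /\ ((exists h, [/\ I h, h != 0 & imgOf h = A]) -> g != 0 /\ imgOf g = A)).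

Lemma gOf_spec A : I (gOf A) /\
  ((exists h, [/\ I h, h != 0 & imgOf h = A]) -> gOf A != 0 /\ imgOf (gOf A) = A).
Proof.
rewrite /gOf.
apply: (@epsilon_spec _ (inhabits 0) (fun g => I g /\ ((exists h, [/\ I h, h != 0 & imgOf h = A]) -> g != 0 /\ imgOf g = A))).
case: (classic (exists h, [/\ I h, h != 0 & imgOf h = A])) => [[h [h1 h2 h3]]|hn].
  by exists h; split => // _.
by exists 0; split; [exact: I0 | move=> /hn].
Qed.

Lemma reps_exist : exists L', [/\ uniq L', (size L' <= D2 r m.+1 + 1)%N,
  (forall g, g \in L' -> I g),
  (forall x y, x \in L' -> y \in L' -> sim x y -> x = y) &
  (forall g, I g -> exists2 g', g' \in L' & sim g g')].
Proof.
pose L := 0 :: [seq gOf A | A <- enum [set: {set 'I_m.+1}]].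
have LI : forall x, x \in L -> I x.
  move=> x; rewrite inE => /orP[/eqP -> | /mapP[A _ ->]]; [exact: I0 | exact: (gOf_spec A).1].
have Lcov : forall g, I g -> exists2 l, l \in L & sim g l.
  move=> g hg; case: (eqVneq g 0) => [->|g0].
    by exists 0; [rewrite inE eqxx | exact: (sim_refl I0)].
  have [hgA hspec] := gOf_spec (imgOf g).
  have [hne he] := hspec (ex_intro _ g (And3 hg g0 erefl)).
  exists (gOf (imgOf g)).
    by rewrite inE; apply/orP; right; apply/map_f; rewrite mem_enum inE.
  by apply: t_step; apply: sigma_same => //; rewrite he.
have [L' [hu hsub hpw hcov]] := @reduce _ sim sim_sym (fun x y z => @t_trans _ _ x y z) L
  (fun x hx => sim_refl (LI x hx)).
exists L'; split => //.
- pose nz := [seq g <- L' | g != 0].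
  have hnzu : uniq (map imgOf nz).
    rewrite map_inj_in_uniq ?filter_uniq //.
    move=> x y; rewrite !mem_filter => /andP[x0 xL] /andP[y0 yL] e.
    apply: hpw => //; apply: t_step; apply: sigma_same => //; exact: LI (hsub _ _).
  have hsz : (size L' <= size nz + 1)%N.
    rewrite size_filter -(count_predC (fun g => g != 0) L') leq_add2l.
    apply: (@leq_trans (count_mem 0 L')); last by rewrite count_uniq_mem // leq_b1.
    by apply: eq_leq; apply: eq_count => x; rewrite /= negbK.
  pose Fam := [set:: map imgOf nz].
  have hcard : #|Fam| = size nz by rewrite cardsE (card_uniqP hnzu) size_map.
  have hD : (#|Fam| <= D2 r m.+1)%N.
    rewrite /D2; apply: (@leq_bigmax_cond _ _ (fun Fam : {set {set 'I_m.+1}} => #|Fam|) Fam).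
    apply/andP; split.
      apply/forallP => A; apply/implyP; rewrite inE => /mapP[g].
      rewrite mem_filter => /andP[g0 gL] ->.
      by apply/eqP; apply: card_imgOf => //; apply: LI (hsub _ gL).
    apply/forallP => x; apply/forallP => y; apply/implyP => hxy.
    apply/card_le1_eqP => A B.
    rewrite !inE => /and3P[hA xA yA] /and3P[hB xB yB].
    case/mapP: hA => g; rewrite mem_filter => /andP[g0 gL] eA.
    case/mapP: hB => h; rewrite mem_filter => /andP[h0 hL] eB.
    have hgI := LI _ (hsub _ gL); have hhI := LI _ (hsub _ hL).
    suff e : h = g by rewrite eA eB e.
    apply: hpw => //; apply: t_step; apply: sigma_of_img => //.
    rewrite -eA -eB; apply: (@leq_trans #|[set x; y]|); first by rewrite cards2 hxy.
    by apply: subset_leq_card; apply/subsetP => z; rewrite !inE => /orP[/eqP->|/eqP->];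
      rewrite ?xA ?xB ?yA ?yB.
  by apply: leq_trans hsz _; rewrite leq_add2r -hcard.
- by move=> g hg; apply: LI (hsub _ hg).
- move=> g hg; have [l hl hgl] := Lcov g hg; have [l' hl' hll'] := hcov l hl.
  by exists l' => //; apply: t_trans hgl hll'.
Qed.

Lemma part2 (L' : seq 'M[F]_(d j)) : (size L' <= D2 r m.+1 + 1)%N ->
  (forall g, I g -> exists2 g', g' \in L' & sim g g') ->
  forall g, I g -> exists z, (size z <= D2 r m.+1)%N /\ sim (g *m th z) 0.
Proof.
move=> hsz hcov g hg.
have [w0 h0] := sync_word.
have base : sim (g *m th w0) 0 by rewrite h0 mulmx0; exact: (sim_refl I0).
suff: forall n z, (size z <= n)%N -> sim (g *m th z) 0 ->
  exists z', (size z' <= D2 r m.+1)%N /\ sim (g *m th z') 0.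
  by move=> /(_ _ w0 (leqnn _) base).
elim=> [|n IH] z hz hs.
  by exists z; split => //; apply: leq_trans hz _.
case: (leqP (size z) (D2 r m.+1)) => [hle|hgt]; first by exists z.
case: (classic (exists z', (size z' < size z)%N /\ sim (g *m th z') 0)) => [[z' [hz' hs']]|hn].
  by apply: (IH z') => //; rewrite -ltnS (leq_trans hz' hz).
exfalso.
pose P t := g *m th (take t z).
have PI : forall t, I (P t) by move=> t; apply: I_right.
pose rep h := epsilon (inhabits (0 : 'M[F]_(d j))) (fun h' => h' \in L' /\ sim h h').
have rep_sp : forall h, I h -> rep h \in L' /\ sim h (rep h).
  move=> h hh; rewrite /rep.
  apply: (@epsilon_spec _ (inhabits (0 : 'M[F]_(d j))) (fun h' => h' \in L' /\ sim h h')).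
  by have [h' h1 h2] := hcov h hh; exists h'.
have short : forall s t, (s < t)%N -> (t <= size z)%N -> sim (P s) (P t) -> False.
  move=> s t hst htz hsim; apply: hn; exists (take s z ++ drop t z); split.
    rewrite size_cat size_take size_drop (leq_trans hst htz).
    have h1 : (s + (size z - t) < t + (size z - t))%N by rewrite ltn_add2r.
    by rewrite (subnKC htz) in h1.
  have := sim_compat (drop t z) hsim; rewrite /P -!mulmxA -!th_cat cat_take_drop => h1.
  exact: t_trans h1 hs.
have hinj : {in iota 0 (size z).+1 &, injective (fun t => rep (P t))}.
  move=> s t; rewrite !mem_iota !add0n /= !ltnS => hs' ht' e.
  have hst : sim (P s) (P t).
    have [_ a1] := rep_sp _ (PI s); have [_ a2] := rep_sp _ (PI t).
    by apply: t_trans a1 _; rewrite e; apply: sim_sym a2.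
  case: (ltngtP s t) => // lt; exfalso.
    exact: short lt ht' hst.
  exact: short lt hs' (sim_sym hst).
have := @uniq_leq_size _ (map (fun t => rep (P t)) (iota 0 (size z).+1)) L'.
rewrite map_inj_in_uniq ?iota_uniq // size_map size_iota => /(_ isT).
have hsub : {subset map (fun t => rep (P t)) (iota 0 (size z).+1) <= L'}.
  by move=> x /mapP[t _ ->]; apply: (rep_sp _ (PI t)).1.
move=> /(_ hsub) h; have := leq_trans h hsz; rewrite addn1 ltnS leqNgt hgt.
done.
Qed.

End Main.

(* The automaton has n = m.+1 states; C = R[i] with R : realType. *)
Theorem mainTheorem10 (R : realType) (S : finType) (m : nat)
  (delta : 'I_m.+1 -> S -> 'I_m.+1)
  (k : nat) (d : 'I_k -> nat)
  (phi : forall j : 'I_k, 'M[R[i]]_m -> 'M[R[i]]_(d j))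
  (v u : seq S) (j : 'I_k) (I : 'M[R[i]]_(d j) -> Prop) (r : nat) :
  synchronizing delta ->
  WA_decomp (gen_alg (fun A => exists w, A = rho delta (R[i]) w)) phi ->
  unique_zero_minimal_ideal (theta_monoid delta phi j) I ->
  v_minimal delta phi v u ->
  j \in supp delta phi u ->
  is_Rnk delta phi j I r ->
  (exists reps : seq 'M[R[i]]_(d j),
      [/\ (size reps <= D2 r m.+1 + 1)%N,
          forall g, g \in reps -> I g &
          forall g, I g -> exists2 g', g' \in reps & sim_rel delta phi u j I g g'])
  /\
  (forall g, I g -> exists z : seq S,
      (size z <= D2 r m.+1)%N /\ sim_rel delta phi u j I (g *m theta delta phi j z) 0).
Proof.
move=> hsync hWA hI _ hu hR.
have [L' [_ hsz hIL _ hcov]] := reps_exist hWA hsync hI hu hR.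
split; first by exists L'.
by move=> g hg; apply: (part2 hWA hsync hI hu hR hsz hcov hg).
Qed.
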